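(* If a $3$-connected graph has a mixed bicycle, then it is $K_{2,3}$-based.
   Context: A mixed bicycle in a graph is a pair $(Q_o,Q_e)$ of vertex-disjoint cycles where $Q_o$ has odd length and $Q_e$ has even length at least four. To bisubdivide an edge is to subdivide it by inserting an even number of new vertices; a bisubdivision of $K$ is obtained by bisubdividing some (possibly none) of its edges. A graph is $K_{2,3}$-based if it contains a subgraph that is a bisubdivision of $K_{2,3}$. *)

(* Defs.v *)
(* Finite simple graphs as a symmetric irreflexive relation
   e : rel T on a finType T. *)
From mathcomp Require Import all_boot.
Set Implicit Arguments. Unset Strict Implicit. Unset Printing Implicit Defensive.

Section Graphs.
Variables (T : finType) (e : rel T).

Definition is_graph_cycle (c : seq T) : bool :=
  [&& 3 <= size c, uniq c & cycle e c].

Definition mixed_bicycle (Qo Qe : seq T) : Prop :=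
  [/\ is_graph_cycle Qo, is_graph_cycle Qe, odd (size Qo),
      ~~ odd (size Qe) /\ 4 <= size Qe & [disjoint Qo & Qe]].

Definition has_mixed_bicycle : Prop := exists Qo Qe, mixed_bicycle Qo Qe.

Definition del_rel (S : {set T}) : rel T :=
  [rel x y | [&& e x y, x \notin S & y \notin S]].

Definition k_connected (k : nat) : Prop :=
  k < #|T| /\
  forall S : {set T}, #|S| < k ->
    forall x y, x \notin S -> y \notin S -> connect (del_rel S) x y.

(* A path x :: p (as a vertex sequence) from x to y with no repeated
   vertices; its number of edges is [size p]. *)
Definition is_xy_path (x y : T) (p : seq T) : bool :=
  [&& path e x p, last x p == y & uniq (x :: p)].

(* Interior vertices of the path x :: p (all but first and last). *)
Definition interior (p : seq T) : seq T := take (size p).-1 p.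

(* The graph contains a subgraph which is a bisubdivision of K_{2,3}:
   branch vertices a 0, a 1 (one side) and b 0, b 1, b 2 (other side),
   all distinct, and for each pair (i,j) a path P i j from a i to b j with an
   odd number of edges (i.e. an even number of subdividing vertices), the
   paths being internally vertex-disjoint and their interiors avoiding all
   branch vertices. *)
Definition K23_based : Prop :=
  exists (a : 'I_2 -> T) (b : 'I_3 -> T) (P : 'I_2 -> 'I_3 -> seq T),
  [/\ injective a /\ injective b, (forall i j, a i != b j),
      (forall i j, is_xy_path (a i) (b j) (P i j) /\ odd (size (P i j))),
      (forall i j, (forall k, a k \notin interior (P i j)) /\ (forall l, b l \notin interior (P i j)))
    & (forall i j i' j', (i, j) != (i', j') ->
          [disjoint interior (P i j) & interior (P i' j')])].

End Graphs.

(* Main.v *)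
Require Import Defs.
From mathcomp Require Import all_boot.
From mathcomp Require Import zify.
From Stdlib Require Import Classical.
Set Implicit Arguments. Unset Strict Implicit. Unset Printing Implicit Defensive.

Section PathLemmas.
Variable T : eqType.

Lemma path_fwd (r : rel T) (Q : pred T) z p :
  path r z p -> Q z -> (forall u v, r u v -> Q u -> Q v) -> Q (last z p).
Proof.
elim: p z => [|v p IH] z //= /andP[rzv pv] Qz step.
by apply: IH => //; apply: step Qz.
Qed.

Lemma path_bwd (r : rel T) (Q : pred T) z p :
  path r z p -> Q (last z p) -> (forall u v, r u v -> Q v -> Q u) -> Q z.
Proof.
elim: p z => [|v p IH] z /=; first by move=> _ ->.
move=> /andP[rzv pv] Ql step.
by apply: (step _ _ rzv); apply: (IH v pv Ql step).
Qed.

Lemma path_restrict (r : rel T) (Q : pred T) z p :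
  path r z p -> all Q (z :: p) -> path [rel u v | [&& r u v, Q u & Q v]] z p.
Proof.
elim: p z => [|v p IH] z //= /andP[rzv pv] /and3P[Qz Qv Qp].
by rewrite rzv Qz Qv /=; apply: IH => //=; rewrite Qv.
Qed.

Lemma path_restrict_all (r : rel T) (Q : pred T) z p :
  path [rel u v | [&& r u v, Q u & Q v]] z p -> all Q p.
Proof.
elim: p z => [|v p IH] z //= /andP[/and3P[_ _ Qv] pv].
by rewrite Qv (IH v).
Qed.

Lemma prefixP (r : rel T) (X : pred T) z p :
  path r z p -> has X (z :: p) ->
  exists q q', [/\ p = q ++ q', path r z q, X (last z q) & ~~ has X (belast z q)].
Proof.
elim: p z => [|v p IH] z /=.
  by move=> _; rewrite ?orbF => Xz; exists [::], [::].
move=> /andP[rzv pv]; case Xz: (X z) => /= H.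
  by exists [::], (v :: p).
have [q [q' [-> pq Xl nh]]] := IH v pv H.
by exists (v :: q), q'; rewrite /= rzv pq Xl Xz.
Qed.

Lemma suffixP (r : rel T) (X : pred T) z p :
  path r z p -> has X (z :: p) ->
  exists pre z' q, [/\ z :: p = pre ++ z' :: q, path r z' q,
     last z' q = last z p, X z' & ~~ has X q].
Proof.
elim: p z => [|v p IH] z /=.
  by move=> _; rewrite ?orbF => Xz; exists [::], z, [::].
move=> /andP[rzv pv]; case H: (has X (v :: p)) => /=.
  have [pre [z' [q [E pq lq Xz' nh]]]] := IH v pv H.
  by exists (z :: pre), z', q; rewrite E.
rewrite ?orbF => Xz; exists [::], z, (v :: p); split => //=; rewrite ?rzv ?H //.
by move: Xz; rewrite H orbF.
Qed.

Lemma subseq_flatten (I : Type) (f g : I -> seq T) (L : seq I) :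
  (forall i, subseq (f i) (g i)) -> subseq (flatten (map f L)) (flatten (map g L)).
Proof.
move=> H; elim: L => [|i L IH] //=.
by apply: cat_subseq.
Qed.

Lemma uniq_flatten_map_g (I : eqType) (vs : I -> seq T) (g : I -> T) (L : seq I) :
  (forall i, g i \in vs i) -> uniq (flatten (map vs L)) -> uniq (map g L).
Proof.
move=> Hg; elim: L => [|i L IH] //=; rewrite cat_uniq => /and3P[ui dis uL].
rewrite IH // andbT; apply/negP => /mapP[j jL gj].
move/hasP: dis; apply; exists (g i); last by apply: Hg.
by apply/flattenP; exists (vs j); [apply: map_f | rewrite gj Hg].
Qed.

Lemma uniq_flatten_common (I : eqType) (vs : I -> seq T) (L : seq I) i j z :
  uniq (flatten (map vs L)) -> i \in L -> j \in L -> z \in vs i -> z \in vs j -> i = j.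
Proof.
elim: L => [|k L IH] //=; rewrite cat_uniq => /and3P[uk dis uL].
rewrite !inE => /orP[/eqP->|iL] /orP[/eqP->|jL] zi zj //.
- move/hasP: dis; case; exists z => //.
  by apply/flattenP; exists (vs j) => //; apply: map_f.
- move/hasP: dis; case; exists z => //.
  by apply/flattenP; exists (vs i) => //; apply: map_f.
- exact: IH.
Qed.

Lemma uniq_flatten_each (I : eqType) (vs : I -> seq T) (L : seq I) i :
  uniq (flatten (map vs L)) -> i \in L -> uniq (vs i).
Proof.
elim: L => [|k L IH] //=; rewrite cat_uniq => /and3P[uk dis uL].
by rewrite inE => /orP[/eqP->|iL] //; apply: IH.
Qed.

Lemma uniq_flattenI (I : eqType) (vs : I -> seq T) (L : seq I) :
  uniq L -> (forall i, i \in L -> uniq (vs i)) ->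
  (forall i j z, i \in L -> j \in L -> z \in vs i -> z \in vs j -> i = j) ->
  uniq (flatten (map vs L)).
Proof.
elim: L => [|k L IH] //= /andP[kL uL] Hu Hc.
rewrite cat_uniq Hu ?mem_head //= IH //; last first.
- by move=> i j z iL jL; apply: Hc; rewrite inE ?iL ?jL orbT.
- by move=> i iL; apply: Hu; rewrite inE iL orbT.
rewrite andbT; apply/hasP => [[z /flattenP[s /mapP[j jL ->] zj] zk]].
have E := Hc k j z (mem_head _ _) _ zk zj.
by move: kL; rewrite E ?jL // inE jL orbT.
Qed.

End PathLemmas.

Section More.
Variable T : eqType.

Lemma path_fwd_all (r : rel T) (P Q : pred T) z p :
  path r z p -> Q z -> all P (z :: p) ->
  (forall u v, r u v -> Q u -> P v -> Q v) -> all Q (z :: p).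
Proof.
elim: p z => [|v p IH] z /=; first by move=> _ ->.
move=> /andP[rzv pv] Qz /and3P[Pz Pv Pp] step.
rewrite Qz /=; apply: IH => //; first exact: (step _ _ rzv Qz Pv).
by rewrite /= Pv.
Qed.

Lemma path_bwd_all (r : rel T) (P Q : pred T) z p :
  path r z p -> Q (last z p) -> all P (z :: p) ->
  (forall u v, r u v -> Q v -> P u -> Q u) -> all Q (z :: p).
Proof.
elim: p z => [|v p IH] z /=; first by move=> _ ->.
move=> /andP[rzv pv] Ql /and3P[Pz Pv Pp] step.
have /andP[Qv Qp] : all Q (v :: p) by apply: IH => //=; rewrite Pv.
by rewrite (step _ _ rzv Qv Pz) /= Qv.
Qed.

Lemma choose_list (Q : T * seq T -> Prop) (vs : T * seq T -> seq T) (Ps : seq (T * seq T)) :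
  (forall P, P \in Ps -> exists P', Q P' /\ subseq (vs P') (vs P)) ->
  exists Ps', [/\ size Ps' = size Ps, forall P', P' \in Ps' -> Q P' &
     subseq (flatten (map vs Ps')) (flatten (map vs Ps))].
Proof.
elim: Ps => [|P Ps IH] H; first by exists [::].
have [|Ps' [s1 H1 H2]] := IH.
  by move=> P0 P0in; apply: H; rewrite inE P0in orbT.
have [P' [QP' sP']] := H P (mem_head _ _).
exists (P' :: Ps'); split => //=; first by rewrite s1.
  by move=> P0; rewrite inE => /orP[/eqP->|]; [|apply: H1].
exact: cat_subseq.
Qed.
End More.

Section Menger.
Variable T : finType.

Definition sep (e : rel T) (A B S : {set T}) :=
  forall x p, path e x p -> x \in A -> last x p \in B -> has (mem S) (x :: p).

Definition verts (P : T * seq T) := P.1 :: P.2.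
Definition endP (P : T * seq T) := last P.1 P.2.

Definition goodP (e : rel T) (A B : {set T}) (P : T * seq T) :=
  [&& path e P.1 P.2, P.1 \in A & endP P \in B].

Definition msys e A B k Ps :=
  [/\ size Ps = k, all (goodP e A B) Ps & uniq (flatten (map verts Ps))].

Lemma flatten_single (s : seq T) : flatten (map (fun z => [:: z]) s) = s.
Proof. by elim: s => //= z s ->. Qed.

Lemma menger_base e A B k :
  (forall x y, e x y = false) ->
  (forall S, sep e A B S -> k <= #|S|) -> exists Ps, msys e A B k Ps.
Proof.
move=> e0 Hs.
have sAB : sep e A B (A :&: B).
  move=> x [|y p] /=; last by rewrite e0.
  by move=> _ xA xB; rewrite inE xA xB.
have Hk := Hs _ sAB.
exists (take k [seq (z, [::]) | z <- enum (A :&: B)]); split.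
- by rewrite size_take size_map -cardE; apply/minn_idPl.
- apply/allP => P /mem_take /mapP[z]; rewrite mem_enum inE => /andP[zA zB] ->.
  by rewrite /goodP /endP /= zA zB.
- rewrite -map_take -map_comp.
  rewrite (eq_map (_ : verts \o (fun z => (z, [::])) =1 fun z => [:: z])) //.
  by rewrite flatten_single take_uniq // enum_uniq.
Qed.

Lemma goodP_sub (e1 e2 : rel T) A B P :
  subrel e1 e2 -> goodP e1 A B P -> goodP e2 A B P.
Proof. by move=> sub /and3P[pP PA PB]; rewrite /goodP (sub_path sub pP) PA PB. Qed.

Section Step.
Variables (e e' : rel T) (x y : T).
Hypothesis exy : e x y.
Hypothesis He' : forall u v, e' u v = e u v && ((u, v) != (x, y)).
Variables (A B : {set T}) (k : nat).
Hypothesis IH : forall A B : {set T}, (forall S, sep e' A B S -> k <= #|S|) ->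
  exists Ps, msys e' A B k Ps.
Hypothesis Hs : forall S, sep e A B S -> k <= #|S|.

Lemma sub_e' : subrel e' e.
Proof. by move=> u v; rewrite He' => /andP[]. Qed.

Variable S : {set T}.
Hypothesis sS : sep e' A B S.
Hypothesis ltS : #|S| < k.

Definition eS := [rel u v | [&& e' u v, u \notin S & v \notin S]].
Definition RA z := (z \notin S) && [exists a, [&& a \in A, a \notin S & connect eS a z]].
Definition RB z := (z \notin S) && [exists b, [&& b \in B, b \notin S & connect eS z b]].

Lemma RAB z : RA z -> RB z -> False.
Proof.
move=> /andP[zS /existsP[a /and3P[aA aS caz]]] /andP[_ /existsP[b /and3P[bB bS czb]]].
have /connectP[p pp lp] := connect_trans caz czb.
have pe' : path e' a p by apply: sub_path pp => u v /and3P[].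
have := sS pe' aA; rewrite -lp => /(_ bB) /hasP[w].
have ap : all (fun u => u \notin S) p := path_restrict_all (Q := fun u => u \notin S) pp.
rewrite inE => /orP[/eqP->|wp] wS; first by move/negP: aS; apply.
by move/negP: (allP ap w wp); apply.
Qed.

Lemma RA_step u v : RA u -> e' u v -> v \notin S -> RA v.
Proof.
move=> /andP[uS /existsP[a /and3P[aA aS cau]]] euv vS.
rewrite /RA vS; apply/existsP; exists a; rewrite aA aS.
by apply: connect_trans cau (connect1 _); rewrite /= euv uS vS.
Qed.

Lemma RB_step u v : RB v -> e' u v -> u \notin S -> RB u.
Proof.
move=> /andP[vS /existsP[b /and3P[bB bS cvb]]] euv uS.
rewrite /RB uS; apply/existsP; exists b; rewrite bB bS.
by apply: connect_trans (connect1 _) cvb; rewrite /= euv uS vS.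
Qed.

Lemma RA_A a : a \in A -> a \notin S -> RA a.
Proof. by move=> aA aS; rewrite /RA aS; apply/existsP; exists a; rewrite aA aS connect0. Qed.

Lemma RB_B b : b \in B -> b \notin S -> RB b.
Proof. by move=> bB bS; rewrite /RB bS; apply/existsP; exists b; rewrite bB bS connect0. Qed.

Lemma RA_notS z : RA z -> z \notin S.
Proof. by case/andP. Qed.

Lemma RB_notS z : RB z -> z \notin S.
Proof. by case/andP. Qed.

Lemma not_sepS : ~ sep e A B S.
Proof. by move=> H; have := Hs H; rewrite leqNgt ltS. Qed.

Lemma RAx : RA x.
Proof.
apply/negPn/negP => nRA; apply: not_sepS => x0 p pp x0A lB.
case: (boolP (has (mem S) (x0 :: p))) => // nh; exfalso.
have aS : all (fun u => u \notin S) (x0 :: p) by rewrite all_predC.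
have pr := path_restrict pp aS.
have lS : last x0 p \notin S by apply: (allP aS); apply: mem_last.
have x0S : x0 \notin S by move: aS => /andP[].
apply: (RAB (z := last x0 p)); last exact: RB_B.
apply: (path_fwd pr (RA_A x0A x0S)) => u v /and3P[euv uS vS] RAu.
apply: (RA_step RAu _ vS); rewrite He' euv /=.
apply/eqP => -[Eu _]; by move: nRA; rewrite -Eu RAu.
Qed.

Lemma RBy : RB y.
Proof.
apply/negPn/negP => nRB; apply: not_sepS => x0 p pp x0A lB.
case: (boolP (has (mem S) (x0 :: p))) => // nh; exfalso.
have aS : all (fun u => u \notin S) (x0 :: p) by rewrite all_predC.
have pr := path_restrict pp aS.
have lS : last x0 p \notin S by apply: (allP aS); apply: mem_last.
have x0S : x0 \notin S by move: aS => /andP[].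
apply: (RAB (z := x0)); first exact: RA_A.
apply: (path_bwd pr (RB_B lB lS)) => u v /and3P[euv uS vS] RBv.
apply: (RB_step RBv _ uS); rewrite He' euv /=.
apply/eqP => -[_ Ev]; by move: nRB; rewrite -Ev RBv.
Qed.

Lemma xS : x \notin S. Proof. exact: RA_notS RAx. Qed.
Lemma yS : y \notin S. Proof. exact: RB_notS RBy. Qed.

Definition Sx := x |: S.
Definition Sy := y |: S.

Lemma sepSx : sep e A B Sx.
Proof.
move=> x0 p pp x0A lB.
case: (boolP (has (mem Sx) (x0 :: p))) => // nh; exfalso.
have aS : all (fun u => u \notin Sx) (x0 :: p) by rewrite all_predC.
have pr := path_restrict pp aS.
have lS : last x0 p \notin Sx by apply: (allP aS); apply: mem_last.
have x0S : x0 \notin Sx by move: aS => /andP[].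
move: lS x0S; rewrite !inE !negb_or => /andP[_ lS] /andP[_ x0S].
apply: (RAB (z := last x0 p)); last exact: RB_B.
apply: (path_fwd pr (RA_A x0A x0S)) => u v /and3P[euv uS vS] RAu.
move: uS vS; rewrite !inE !negb_or => /andP[ux uS] /andP[_ vS].
apply: (RA_step RAu _ vS); rewrite He' euv /=.
apply/eqP => -[Eu _]; by move: ux; rewrite Eu eqxx.
Qed.

Lemma sepSy : sep e A B Sy.
Proof.
move=> x0 p pp x0A lB.
case: (boolP (has (mem Sy) (x0 :: p))) => // nh; exfalso.
have aS : all (fun u => u \notin Sy) (x0 :: p) by rewrite all_predC.
have pr := path_restrict pp aS.
have lS : last x0 p \notin Sy by apply: (allP aS); apply: mem_last.
have x0S : x0 \notin Sy by move: aS => /andP[].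
move: lS x0S; rewrite !inE !negb_or => /andP[_ lS] /andP[_ x0S].
apply: (RAB (z := x0)); first exact: RA_A.
apply: (path_bwd pr (RB_B lB lS)) => u v /and3P[euv uS vS] RBv.
move: uS vS; rewrite !inE !negb_or => /andP[_ uS] /andP[vy vS].
apply: (RB_step RBv _ uS); rewrite He' euv /=.
apply/eqP => -[_ Ev]; by move: vy; rewrite Ev eqxx.
Qed.

Lemma cardSx : #|Sx| = k.
Proof.
have := Hs sepSx; rewrite /Sx cardsU1 xS add1n => H.
by apply/eqP; rewrite eqn_leq H ltS.
Qed.

Lemma cardSy : #|Sy| = k.
Proof.
have := Hs sepSy; rewrite /Sy cardsU1 yS add1n => H.
by apply/eqP; rewrite eqn_leq H ltS.
Qed.

Lemma path_e'_belast z q : path e z q -> x \notin belast z q -> path e' z q.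
Proof.
elim: q z => [|v q IHq] z //= /andP[ezv pv]; rewrite inE negb_or => /andP[zx nb].
rewrite He' ezv IHq // andbT; apply/eqP => -[Ez _]; by move: zx; rewrite Ez eqxx.
Qed.

Lemma path_e'_tail z q : path e z q -> y \notin q -> path e' z q.
Proof.
elim: q z => [|v q IHq] z //= /andP[ezv pv]; rewrite inE negb_or => /andP[vy nq].
rewrite He' ezv IHq // andbT; apply/eqP => -[_ Ev]; by move: vy; rewrite Ev eqxx.
Qed.

Lemma IH1 : exists Ps, msys e' A Sx k Ps.
Proof.
apply: IH => T' sT'; apply: Hs => x0 p pp x0A lB.
have [q [q' [Ep pq lq nh]]] := prefixP pp (sepSx pp x0A lB).
have pq' : path e' x0 q.
  apply: (path_e'_belast pq); apply/negP => xb; move/negP: nh; apply.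
  by apply/hasP; exists x => //; rewrite /= !inE eqxx.
have := sT' _ _ pq' x0A lq; rewrite Ep /= has_cat => /orP[->//|->].
by rewrite orbT.
Qed.

Lemma IH2 : exists Qs, msys e' Sy B k Qs.
Proof.
apply: IH => T' sT'; apply: Hs => x0 p pp x0A lB.
have [pre [z' [q [Ep pq lq z'S nh]]]] := suffixP pp (sepSy pp x0A lB).
have pq' : path e' z' q.
  apply: (path_e'_tail pq); apply/negP => xb; move/negP: nh; apply.
  by apply/hasP; exists y => //; rewrite /= !inE eqxx.
have := sT' _ _ pq' z'S; rewrite lq => /(_ lB); rewrite Ep has_cat => ->.
by rewrite orbT.
Qed.


Definition trimPprop (P : T * seq T) :=
  [/\ path e' P.1 P.2, P.1 \in A, endP P \in Sx & ~~ has (mem Sx) (belast P.1 P.2)].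
Definition trimQprop (P : T * seq T) :=
  [/\ path e' P.1 P.2, P.1 \in Sy, endP P \in B & ~~ has (mem Sy) P.2].

Lemma trimP : exists Ps, [/\ size Ps = k, forall P, P \in Ps -> trimPprop P &
  uniq (flatten (map verts Ps))].
Proof.
have [Ps [sz aP uP]] := IH1.
have [|Ps' [s1 H1 H2]] := choose_list (Q := trimPprop) (vs := verts) (Ps := Ps).
  move=> [a p] PIn; have /and3P[/= pP PA PB] := allP aP _ PIn.
  have hS : has (mem Sx) (a :: p) by apply/hasP; exists (last a p) => //; apply: mem_last.
  have [q [q' [Ep pq lq nh]]] := prefixP pP hS.
  exists (a, q); split; first by split.
  by rewrite /verts /= Ep; apply: (prefix_subseq (a :: q) q').
by exists Ps'; split => //; [rewrite s1 | apply: subseq_uniq H2 uP].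
Qed.

Lemma trimQ : exists Qs, [/\ size Qs = k, forall P, P \in Qs -> trimQprop P &
  uniq (flatten (map verts Qs))].
Proof.
have [Ps [sz aP uP]] := IH2.
have [|Ps' [s1 H1 H2]] := choose_list (Q := trimQprop) (vs := verts) (Ps := Ps).
  move=> [a p] PIn; have /and3P[/= pP PA PB] := allP aP _ PIn.
  have hS : has (mem Sy) (a :: p) by apply/hasP; exists a => //; apply: mem_head.
  have [pre [z' [q [Ep pq lq z'S nh]]]] := suffixP pP hS.
  have sub : subseq (z' :: q) (a :: p) by rewrite Ep; apply: suffix_subseq.
  exists (z', q); split; first by split => //; rewrite /endP /= lq.
  exact: sub.
by exists Ps'; split => //; [rewrite s1 | apply: subseq_uniq H2 uP].
Qed.


Section Combine.
Variables Ps Qs : seq (T * seq T).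
Hypotheses (szP : size Ps = k) (HP : forall P, P \in Ps -> trimPprop P)
  (uP : uniq (flatten (map verts Ps))).
Hypotheses (szQ : size Qs = k) (HQ : forall P, P \in Qs -> trimQprop P)
  (uQ : uniq (flatten (map verts Qs))).

Definition L1 := map endP Ps.
Definition F1 := map (fun P : T * seq T => P.1) Qs.

Lemma L1S s : s \in Sx -> s \in L1.
Proof.
have uL1 : uniq L1 by apply: (uniq_flatten_map_g (g := endP)) uP => P; apply: mem_last.
have sub : {subset L1 <= Sx}.
  by move=> z /mapP[P PIn ->]; have [] := HP PIn.
have E : #|L1| = #|Sx| by rewrite cardSx (card_uniqP uL1) size_map szP.
have sAB : L1 \subset Sx by apply/subsetP.
by move=> sSx; rewrite (elimT (subset_cardP E) sAB).
Qed.

Lemma F1S s : s \in Sy -> s \in F1.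
Proof.
have uF1 : uniq F1 by apply: (uniq_flatten_map_g (g := fun P : T * seq T => P.1)) uQ => P; apply: mem_head.
have sub : {subset F1 <= Sy}.
  by move=> z /mapP[P PIn ->]; have [] := HQ PIn.
have E : #|F1| = #|Sy| by rewrite cardSy (card_uniqP uF1) size_map szQ.
have sAB : F1 \subset Sy by apply/subsetP.
by move=> sSy; rewrite (elimT (subset_cardP E) sAB).
Qed.

Definition Pof s := nth (s, [::]) Ps (index s L1).
Definition Qof s := nth (s, [::]) Qs (index s F1).

Lemma Pof_in s : s \in Sx -> Pof s \in Ps.
Proof.
by move=> /L1S sL; apply: mem_nth; rewrite -(size_map endP) index_mem.
Qed.

Lemma Pof_last s : s \in Sx -> endP (Pof s) = s.
Proof.
move=> /L1S sL; rewrite /Pof -(nth_map (s, [::]) s endP) ?nth_index //.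
by rewrite -(size_map endP) index_mem.
Qed.

Lemma Qof_in s : s \in Sy -> Qof s \in Qs.
Proof.
by move=> /F1S sL; apply: mem_nth; rewrite -(size_map (fun P : T * seq T => P.1)) index_mem.
Qed.

Lemma Qof_first s : s \in Sy -> (Qof s).1 = s.
Proof.
move=> /F1S sL; rewrite /Qof -(nth_map (s, [::]) s (fun P : T * seq T => P.1)) ?nth_index //.
by rewrite -(size_map (fun P : T * seq T => P.1)) index_mem.
Qed.

Lemma zoneP P z : P \in Ps -> z \in verts P -> z = endP P \/ RA z.
Proof.
case: P => a p PIn; have [/= pP aA lS nh] := HP PIn.
rewrite /verts /endP /= lastI mem_rcons inE => /orP[/eqP->|zb]; first by left.
right; move: zb nh pP; clear PIn lS; case/lastP: p => [|q l] //.
rewrite belast_rcons rcons_path => zb nh /andP[pq _].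
have aS : all (fun u => u \notin S) (a :: q).
  apply/allP => u uIn; apply/negP => uS; move/negP: nh; apply; apply/hasP.
  by exists u => //; rewrite /= !inE uS orbT.
have aA' : a \notin S by move: aS => /andP[].
have := path_fwd_all (Q := RA) pq (RA_A aA aA') aS.
move=> /(_ (fun u v euv RAu vS => RA_step RAu euv vS)) /allP; apply; exact: zb.
Qed.

Lemma zoneQ P z : P \in Qs -> z \in verts P -> z = P.1 \/ RB z.
Proof.
case: P => a p PIn; have [/= pP aS lB nh] := HQ PIn.
rewrite /verts /= inE => /orP[/eqP->|zp]; first by left.
right; move: zp nh pP lB; clear PIn; case: p => [|v q] // zq nh; rewrite /= => /andP[_ pq] lB.
have aS' : all (fun u => u \notin S) (v :: q).
  apply/allP => u uIn; apply/negP => uS; move/negP: nh; apply; apply/hasP.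
  by exists u => //; rewrite /= !inE uS orbT.
have lS : last v q \notin S by apply: (allP aS'); apply: mem_last.
have := path_bwd_all (Q := RB) pq (RB_B lB lS) aS'.
move=> /(_ (fun u v euv RBv uS => RB_step RBv euv uS)) /allP; apply; exact: zq.
Qed.

Lemma key P Q z : P \in Ps -> Q \in Qs -> z \in verts P -> z \in verts Q ->
  [/\ z = endP P, z = Q.1 & z \in S].
Proof.
move=> PIn QIn zP zQ.
have [_ _ lS _] := HP PIn; have [_ fS _ _] := HQ QIn.
case: (zoneP PIn zP) => [zl|RAz]; case: (zoneQ QIn zQ) => [zf|RBz].
- move: lS fS; rewrite /Sx /Sy -zl -zf !inE.
  case/orP => [/eqP zx|->]; last by [].
  case/orP => [/eqP zy|->]; last by [].
  by exfalso; apply: (RAB (z := x)); [exact: RAx | rewrite -zx zy; exact: RBy].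
- move: lS; rewrite /Sx -zl !inE => /orP[/eqP zx|zS].
    by exfalso; apply: (RAB (z := z)); [rewrite zx; exact: RAx | exact: RBz].
  by move: (RB_notS RBz); rewrite zS.
- move: fS; rewrite /Sy -zf !inE => /orP[/eqP zy|zS].
    by exfalso; apply: (RAB (z := z)); [exact: RAz | rewrite zy; exact: RBy].
  by move: (RA_notS RAz); rewrite zS.
- by exfalso; exact: (RAB RAz RBz).
Qed.


Lemma xSx : x \in Sx. Proof. by rewrite !inE eqxx. Qed.
Lemma ySy : y \in Sy. Proof. by rewrite !inE eqxx. Qed.

Definition tS s := if s == x then y else s.
Definition J s := ((Pof s).1, (Pof s).2 ++ (if s == x then verts (Qof y) else (Qof s).2)).

Lemma tt_Sy s : s \in Sx -> tS s \in Sy.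
Proof.
rewrite /tS; case: eqP => [_ _|/eqP sx]; first exact: ySy.
by rewrite !inE (negbTE sx) /= => sS0; rewrite sS0 orbT.
Qed.

Lemma Sx_S s : s \in Sx -> s != x -> s \in S.
Proof. by rewrite !inE => /orP[->|]. Qed.

Lemma J_verts s z : z \in verts (J s) -> z \in verts (Pof s) \/ z \in verts (Qof (tS s)).
Proof.
rewrite /J /verts /tS /= inE mem_cat => /or3P[zP|zP|zQ].
- by left; rewrite inE zP.
- by left; rewrite inE zP orbT.
- right; move: zQ; case: eqP => _ //= zQ; by rewrite inE zQ orbT.
Qed.

Lemma J_good s : s \in Sx -> goodP e A B (J s).
Proof.
move=> sSx; have PIn := Pof_in sSx; have Pl := Pof_last sSx.
have [pP PA _ _] := HP PIn.
rewrite /goodP /J /endP /= PA /=.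
case: eqP => [sx|/eqP sx].
  have QIn := Qof_in ySy; have Qf := Qof_first ySy.
  have [pQ _ QB _] := HQ QIn.
  move: Pl QB; rewrite /endP /verts => Pl QB.
  rewrite cat_path last_cat Pl (sub_path sub_e' pP) /=.
  by rewrite QB andbT (sub_path sub_e' pQ) andbT Qf sx exy.
have sS0 := Sx_S sSx sx.
have sSy : s \in Sy by rewrite !inE sS0 orbT.
have QIn := Qof_in sSy; have Qf := Qof_first sSy.
have [pQ _ QB _] := HQ QIn.
move: Pl QB; rewrite /endP => Pl QB.
rewrite cat_path last_cat Pl (sub_path sub_e' pP) /= -{1}Qf (sub_path sub_e' pQ) /=.
by rewrite -{1}Qf.
Qed.


Lemma J_uniq s : s \in Sx -> uniq (verts (J s)).
Proof.
move=> sSx; have PIn := Pof_in sSx; have Pl := Pof_last sSx.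
have -> : verts (J s) = verts (Pof s) ++ (if s == x then verts (Qof y) else (Qof s).2) by [].
rewrite cat_uniq (uniq_flatten_each uP PIn) /=.
case: eqP => [sx|/eqP sx].
  rewrite (uniq_flatten_each uQ (Qof_in ySy)) andbT.
  apply/hasP => -[z zQ zP]; have [zl _ zS] := key PIn (Qof_in ySy) zP zQ.
  by move: xS; rewrite -sx -Pl -zl zS.
have sSy : s \in Sy by rewrite !inE (Sx_S sSx sx) orbT.
have QIn := Qof_in sSy; have uQs := uniq_flatten_each uQ QIn.
move: uQs; rewrite /verts /= => /andP[nQ ->]; rewrite andbT.
apply/hasP => -[z zQ zP].
have zQ' : z \in verts (Qof s) by rewrite inE zQ orbT.
have [_ zf _] := key PIn QIn zP zQ'.
by move: nQ; rewrite -zf zQ.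
Qed.

Lemma tS_inj s s' : s \in Sx -> s' \in Sx -> tS s = tS s' -> s = s'.
Proof.
move=> sSx s'Sx; rewrite /tS.
case: eqP => [sx|/eqP sx]; case: eqP => [s'x|/eqP s'x] //.
- by rewrite sx s'x.
- by move=> E; move: yS; rewrite E (Sx_S s'Sx s'x).
- by move=> E; move: yS; rewrite -E (Sx_S sSx sx).
Qed.

Lemma J_common_PQ s s' z : s \in Sx -> s' \in Sx ->
  z \in verts (Pof s) -> z \in verts (Qof (tS s')) -> s = s'.
Proof.
move=> sSx s'Sx zP zQ.
have [zl zf zS] := key (Pof_in sSx) (Qof_in (tt_Sy s'Sx)) zP zQ.
rewrite (Qof_first (tt_Sy s'Sx)) in zf; rewrite (Pof_last sSx) in zl.
move: zf; rewrite /tS; case: eqP => [s'x|_ ]; last by rewrite -zl.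
by move=> zy; move: yS; rewrite -zy zS.
Qed.

Lemma J_common s s' z : s \in Sx -> s' \in Sx ->
  z \in verts (J s) -> z \in verts (J s') -> s = s'.
Proof.
move=> sSx s'Sx /J_verts[zP|zQ] /J_verts[zP'|zQ'].
- have E := uniq_flatten_common uP (Pof_in sSx) (Pof_in s'Sx) zP zP'.
  by rewrite -(Pof_last sSx) -(Pof_last s'Sx) E.
- exact: J_common_PQ zP zQ'.
- by apply/esym; apply: J_common_PQ zP' zQ.
- have E := uniq_flatten_common uQ (Qof_in (tt_Sy sSx)) (Qof_in (tt_Sy s'Sx)) zQ zQ'.
  apply: tS_inj => //.
  by rewrite -(Qof_first (tt_Sy sSx)) -(Qof_first (tt_Sy s'Sx)) E.
Qed.

Lemma combine : exists Ls, msys e A B k Ls.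
Proof.
exists (map J (enum Sx)); split.
- by rewrite size_map -cardE cardSx.
- by apply/allP => i /mapP[s sIn ->]; apply: J_good; rewrite mem_enum in sIn.
apply: uniq_flattenI.
- rewrite map_inj_in_uniq ?enum_uniq // => s s' sIn s'In E.
  rewrite !mem_enum in sIn s'In.
  apply: (J_common (z := (J s).1)) => //; first exact: mem_head.
  by rewrite -E; exact: mem_head.
- by move=> i /mapP[s sIn ->]; apply: J_uniq; rewrite mem_enum in sIn.
- move=> i j z /mapP[s sIn ->] /mapP[s' s'In ->] zi zj.
  rewrite !mem_enum in sIn s'In.
  by rewrite (J_common sIn s'In zi zj).
Qed.

End Combine.

Lemma step_case : exists Ls, msys e A B k Ls.
Proof.
have [Ps [szP HP uP]] := trimP.
have [Qs [szQ HQ uQ]] := trimQ.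
exact: combine szP HP uP szQ HQ uQ.
Qed.

End Step.

Lemma menger_n n : forall e A B k, #|[set u : T * T | e u.1 u.2]| <= n ->
  (forall S, sep e A B S -> k <= #|S|) -> exists Ps, msys e A B k Ps.
Proof.
elim: n => [|n IHn] e A B k Hn Hs.
  apply: menger_base Hs => u v; apply/negP => euv.
  suff : 0 < #|[set u : T * T | e u.1 u.2]| by rewrite lt0n; move: Hn; rewrite leqn0 => /eqP ->.
  by apply/card_gt0P; exists (u, v); rewrite inE.
case: (pickP [pred u : T * T | e u.1 u.2]) => [[x y] /= exy|none]; last first.
  by apply: menger_base Hs => u v; apply: (none (u, v)).
pose e' := [rel u v | e u v && ((u, v) != (x, y))].
have He' : forall u v, e' u v = e u v && ((u, v) != (x, y)) by [].
have IH : forall A B : {set T}, (forall S, sep e' A B S -> k <= #|S|) ->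
    exists Ps, msys e' A B k Ps.
  move=> A' B' Hs'; apply: (IHn e' A' B' k _ Hs').
  have : #|[set u : T * T | e' u.1 u.2]| < #|[set u : T * T | e u.1 u.2]|.
    apply: proper_card; apply/properP; split.
      by apply/subsetP => u; rewrite !inE => /andP[].
    by exists (x, y); rewrite !inE ?exy /= ?eqxx ?andbF ?andbT.
  by move=> H; rewrite -ltnS; apply: leq_trans H Hn.
case: (classic (exists S, sep e' A B S /\ #|S| < k)) => [[S [sS ltS]]|nS].
  exact: (step_case exy He' IH Hs sS ltS).
have Hs' : forall S, sep e' A B S -> k <= #|S|.
  by move=> S sS; rewrite leqNgt; apply/negP => lt; apply: nS; exists S.
have [Ps [sz aP uP]] := IH A B Hs'.
exists Ps; split => //; apply/allP => P PIn.
by apply: (goodP_sub _ (allP aP P PIn)) => u v /andP[].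
Qed.

Lemma menger e A B k : (forall S, sep e A B S -> k <= #|S|) -> exists Ps, msys e A B k Ps.
Proof. exact: (menger_n (leqnn _)). Qed.

End Menger.

Section Seqs.
Variable T : finType.

Lemma disjP (s1 s2 : seq T) :
  reflect (forall z, z \in s1 -> z \in s2 -> False) [disjoint s1 & s2].
Proof.
apply: (iffP pred0P) => [H z z1 z2|H z /=]; first by move: (H z); rewrite /= z1 z2.
by apply/negP => /andP[z1 z2]; apply: (H z).
Qed.

Lemma interior_rcons (q : seq T) z : interior (rcons q z) = q.
Proof. by rewrite /interior size_rcons /= -cats1 take_size_cat. Qed.

Definition revp (u : T) (R : seq T) := rev (belast u R).

Lemma revp_cons u R : last u R :: revp u R = rev (u :: R).
Proof. by rewrite /revp (lastI u R) rev_rcons. Qed.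

Lemma revp_last u R : last (last u R) (revp u R) = u.
Proof.
have -> : last (last u R) (revp u R) = last u (last u R :: revp u R) by [].
by rewrite revp_cons rev_cons last_rcons.
Qed.

Lemma revp_size u R : size (revp u R) = size R.
Proof. by rewrite /revp size_rev size_belast. Qed.

Lemma revp_mem u R z : (z \in last u R :: revp u R) = (z \in u :: R).
Proof. by rewrite revp_cons mem_rev. Qed.

Lemma revp_uniq u R : uniq (last u R :: revp u R) = uniq (u :: R).
Proof. by rewrite revp_cons rev_uniq. Qed.

Lemma revp_path (e : rel T) (esym : symmetric e) u R :
  path e u R -> path e (last u R) (revp u R).
Proof.
by rewrite /revp rev_path; apply: sub_path => a b; rewrite esym.
Qed.


Lemma theta_K23 (e : rel T) (esym : symmetric e) a0 a1 (R : 'I_3 -> seq T) :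
  a0 != a1 ->
  (forall j, [/\ path e a0 (R j), last a0 (R j) = a1, uniq (a0 :: R j) & ~~ odd (size (R j))]) ->
  (forall j j', j != j' -> [disjoint interior (R j) & interior (R j')]) ->
  K23_based e.
Proof.
move=> a01 HR Hdis.
pose b j := head a0 (R j).
pose m j := behead (interior (R j)).
have Rd : forall j, R j = b j :: rcons (m j) a1.
  move=> j; have [_ lR _ ev] := HR j.
  rewrite /m /b; case E: (R j) => [|b0 r]; first by rewrite E /= in lR; move: a01; rewrite lR eqxx.
  case: r E => [|c r] E; first by rewrite E in ev.
  rewrite E /= in lR.
  have -> : b0 :: c :: r = rcons (b0 :: belast c r) a1 by rewrite rcons_cons -lR -lastI.
  by rewrite interior_rcons.
have Ri : forall j, interior (R j) = b j :: m j.
  by move=> j; rewrite {1}Rd -rcons_cons interior_rcons.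
have F : forall j, [/\ a0 != b j, a0 \notin m j, b j != a1, b j \notin m j &
    a1 \notin m j] /\ uniq (m j).
  move=> j; have [_ _ u _] := HR j; move: u; rewrite Rd /= !inE !mem_rcons !inE rcons_uniq.
  rewrite !negb_or => /andP[/and3P[a0b a01' a0m] /andP[/andP[ba1 bm] /andP[a1m um]]].
  by split.
have Fp : forall j, e a0 (b j) /\ path e (b j) (rcons (m j) a1).
  by move=> j; have [p _ _ _] := HR j; move: p; rewrite Rd /= => /andP[].
have Fs : forall j, ~~ odd (size (m j)).
  by move=> j; have [_ _ _ ev] := HR j; move: ev; rewrite Rd /= size_rcons /= negbK.
have Dj : forall j j' z, j != j' -> z \in b j :: m j -> z \in b j' :: m j' -> False.
  by move=> j j' z jj'; rewrite -!Ri; apply/disjP; apply: Hdis.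
have binj : injective b.
  move=> j j' E; apply/eqP; apply/negP => /negP jj'.
  by apply: (Dj j j' (b j) jj'); rewrite ?E mem_head.
exists (fun i : 'I_2 => if val i == 0 then a0 else a1), b,
  (fun (i : 'I_2) j => if val i == 0 then [:: b j] else rcons (rev (m j)) (b j)).
split.
- split => //.
  move=> [[|[|//]] Hi] [[|[|//]] Hi'] /= E; apply/val_inj => //=.
    by move: a01; rewrite E eqxx.
  by move: a01; rewrite E eqxx.
- move=> [[|[|//]] Hi] j /=; have [[? _ ? _ _] _] := F j => //.
  by rewrite eq_sym.
- move=> [[|[|//]] Hi] j /=.
    have [eab _] := Fp j; have [[a0b _ _ _ _] _] := F j.
    by rewrite /is_xy_path /= eab eqxx !inE a0b.
  have [_ pb] := Fp j; have [[_ _ ba1 bm a1m] um] := F j.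
  have pr := revp_path esym pb.
  have Erv : revp (b j) (rcons (m j) a1) = rcons (rev (m j)) (b j).
    by rewrite /revp belast_rcons rev_cons.
  rewrite Erv last_rcons in pr.
  rewrite /is_xy_path pr last_rcons eqxx /= mem_rcons !inE mem_rev.
  rewrite rcons_uniq mem_rev rev_uniq bm um (negbTE a1m) eq_sym (negbTE ba1) /=.
  by rewrite size_rcons size_rev /= Fs.
- move=> [[|[|//]] Hi] j /=.
    by rewrite /interior /=.
  rewrite interior_rcons; have [[_ a0m _ bm a1m] _] := F j; split.
    by move=> [[|[|//]] Hk] /=; rewrite mem_rev.
  move=> l; rewrite mem_rev; apply/negP => blm.
  case: (eqVneq j l) => [jl|jl]; first by subst l; rewrite blm in bm.
  by apply: (Dj j l (b l) jl); rewrite ?inE ?blm ?orbT ?eqxx.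
- move=> [[|[|//]] Hi] j [[|[|//]] Hi'] j' /= Hne.
  - by apply/disjP => z; rewrite /interior /=.
  - by apply/disjP => z; rewrite /interior /=.
  - by apply/disjP => z _; rewrite /interior /=.
  have jj' : j != j'.
    apply/negP => /eqP E; move/negP: Hne; apply; rewrite E; apply/eqP.
    by congr (_, _); apply: val_inj.
  apply/disjP => z; rewrite !interior_rcons !mem_rev => zm zm'.
  by apply: (Dj j j' z jj'); rewrite inE ?zm ?zm' orbT.
Qed.


Definition arc (e : rel T) u v R (C : seq T) :=
  [/\ path e u R, last u R = v, uniq (u :: R) & {subset u :: R <= C}].

Lemma arcs (e : rel T) (esym : symmetric e) P u M v Q :
  uniq (P ++ u :: M ++ v :: Q) -> cycle e (P ++ u :: M ++ v :: Q) ->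
  exists R1 R2, [/\ arc e u v R1 (P ++ u :: M ++ v :: Q), arc e u v R2 (P ++ u :: M ++ v :: Q),
    size R1 = (size M).+1, size R2 = (size Q + size P).+1 &
    [disjoint interior R1 & interior R2]].
Proof.
set C := P ++ _.
have Erot : rot (size P) C = u :: M ++ v :: (Q ++ P) by rewrite /C rot_size_cat /= -catA.
move=> uC cC.
have uW : uniq (u :: M ++ v :: (Q ++ P)) by rewrite -Erot rot_uniq.
have cW : cycle e (u :: M ++ v :: (Q ++ P)) by rewrite -Erot rot_cycle.
have memW : {subset u :: M ++ v :: (Q ++ P) <= C} by move=> z; rewrite -Erot mem_rot.
set X := Q ++ P in uW cW memW *.
move: cW; rewrite /= rcons_cat cat_path /= => /and3P[pM evl pX].
have uW' := uW; move: uW'; rewrite /= mem_cat negb_or cat_uniq /= => /andP[/andP[uM uvX] /and3P[uMl hM /andP[vX uX]]].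
move: uvX; rewrite inE negb_or => /andP[uv uX'].
exists (rcons M v), (rcons (rev X) v); split.
- split; first by rewrite rcons_path pM evl.
  + by rewrite last_rcons.
  + rewrite /= mem_rcons inE negb_or uv uM rcons_uniq uMl andbT /=.
    by rewrite andbT; apply: contra hM => ->.
  + move=> z; rewrite inE mem_rcons inE => H; apply: memW.
    by move: H; rewrite !inE mem_cat !inE => /or3P[->|->|->]; rewrite ?orbT.
- have Erv : revp v (rcons X u) = rcons (rev X) v by rewrite /revp belast_rcons rev_cons.
  split.
  + by have := revp_path esym pX; rewrite Erv last_rcons.
  + by rewrite last_rcons.
  + by rewrite -{1}(last_rcons v X u) -Erv revp_uniq /= mem_rcons inE negb_or eq_sym uv vX rcons_uniq uX' uX.
  + move=> z; rewrite -{1}(last_rcons v X u) -Erv revp_mem => H; apply: memW.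
    by move: H; rewrite !inE mem_rcons !inE mem_cat !inE => /or3P[->|->|->]; rewrite ?orbT.
- by rewrite size_rcons.
- by rewrite size_rcons size_rev size_cat.
- rewrite !interior_rcons; apply/disjP => z zM; rewrite mem_rev => zX.
  by move/negP: hM; apply; apply/orP; right; apply/hasP; exists z.
Qed.


Lemma uniq_cat_notin (s1 s2 : seq T) x : uniq (s1 ++ x :: s2) -> x \notin s1.
Proof.
rewrite cat_uniq => /and3P[_ H _]; apply: contra H => xs.
by apply/hasP; exists x => //; exact: mem_head.
Qed.

Lemma split2 (C : seq T) u v : uniq C -> u \in C -> v \in C -> index u C < index v C ->
  exists P M Q, [/\ C = P ++ u :: M ++ v :: Q, index u C = size P &
    index v C = size P + (size M).+1].
Proof.
move=> uC uIn vIn; move: uC uIn; case/splitPr: vIn => C1 C2 uC uIn.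
have vC1 : v \notin C1 by apply: uniq_cat_notin uC.
rewrite !index_cat (negbTE vC1) /= eqxx addn0.
case: ifP => uC1; last by rewrite ltnNge leq_addr.
move=> _; move: uC1 uC; case/splitPr => P M uC.
exists P, M, C2; split; first by rewrite -catA.
- have uP : u \notin P by move: uC; rewrite -catA; apply: uniq_cat_notin.
  by rewrite index_cat (negbTE uP) /= eqxx addn0.
- by rewrite size_cat.
Qed.


Lemma arc_rev (e : rel T) (esym : symmetric e) u v R C :
  arc e u v R C -> arc e v u (revp u R) C.
Proof.
move=> [pR lR uR sR]; split.
- by rewrite -lR; apply: revp_path.
- by rewrite -{1}lR revp_last.
- by rewrite -lR revp_uniq.
- by move=> z; rewrite -lR revp_mem; apply: sR.
Qed.

Lemma arcs_any (e : rel T) (esym : symmetric e) (C : seq T) u v :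
  uniq C -> cycle e C -> u \in C -> v \in C -> u != v ->
  exists R1 R2, [/\ arc e u v R1 C, arc e u v R2 C & size R1 + size R2 = size C].
Proof.
move=> uC cC uIn vIn uv.
have Hgen : forall u v, u \in C -> v \in C -> index u C < index v C ->
    exists R1 R2, [/\ arc e u v R1 C, arc e u v R2 C & size R1 + size R2 = size C].
  move=> u' v' uIn' vIn' lt.
  have [P [M [Q [EC _ _]]]] := split2 uC uIn' vIn' lt.
  rewrite EC in uC cC *.
  have [R1 [R2 [a1 a2 s1 s2 _]]] := arcs esym uC cC.
  exists R1, R2; split => //.
  rewrite s1 s2 size_cat /= size_cat /=; lia.
case: (ltngtP (index u C) (index v C)) => [lt|gt|E].
- exact: Hgen.
- have [R1 [R2 [a1 a2 sz]]] := Hgen v u vIn uIn gt.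
  exists (revp v R1), (revp v R2); split; try exact: arc_rev.
  by rewrite !revp_size.
- by move: uv; rewrite -(nth_index u uIn) E nth_index ?eqxx.
Qed.

Lemma arcs_even (e : rel T) (esym : symmetric e) (C : seq T) u v :
  uniq C -> cycle e C -> ~~ odd (size C) -> u \in C -> v \in C ->
  index u C < index v C -> odd (index u C) = odd (index v C) ->
  exists R1 R2, [/\ arc e u v R1 C, arc e u v R2 C, ~~ odd (size R1), ~~ odd (size R2) &
    [disjoint interior R1 & interior R2]].
Proof.
move=> uC cC evC uIn vIn lt par.
have [P [M [Q [EC iu iv]]]] := split2 uC uIn vIn lt.
rewrite EC in uC cC evC *.
have [R1 [R2 [a1 a2 s1 s2 dis]]] := arcs esym uC cC.
have e1 : ~~ odd (size R1).
  by move: par; rewrite iu iv s1 oddD => /eqP; rewrite -[X in X == _]addbF eq_sym; case: (odd (size P)); case: (odd _).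
exists R1, R2; split => //.
move: evC e1; rewrite s1 s2 size_cat /= size_cat /= oddD /= oddD /= oddD.
by case: (odd (size P)); case: (odd (size M)); case: (odd (size Q)).
Qed.


Definition conn (e : rel T) (C D : seq T) y p :=
  [/\ path e y p, y \in D, last y p \in C, uniq (y :: p) &
      all (fun z => z \notin D) p && all (fun z => z \notin C) (belast y p)].

Lemma ear (e : rel T) (esym : symmetric e) (C D : seq T) y1 p1 y2 p2 r :
  [disjoint C & D] -> conn e C D y1 p1 -> conn e C D y2 p2 ->
  [disjoint y1 :: p1 & y2 :: p2] -> arc e y1 y2 r D ->
  odd (size r) = odd (size p1 + size p2) ->
  exists E, [/\ path e (last y1 p1) E, last (last y1 p1) E = last y2 p2,
    uniq (last y1 p1 :: E), ~~ odd (size E) &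
    forall z, z \in interior E -> z \notin C].
Proof.
move=> dCD [pp1 y1D x1C u1 /andP[/allP n1D /allP n1C]] [pp2 y2D x2C u2 /andP[/allP n2D /allP n2C]] d12 [pr lr ur sr] par.
have dis : forall z, z \in C -> z \in D -> False by apply/disjP.
have d12' : forall z, z \in y1 :: p1 -> z \in y2 :: p2 -> False by apply/disjP.
exists (revp y1 p1 ++ r ++ p2); split.
- rewrite cat_path revp_path // revp_last cat_path pr lr pp2.
  by [].
- by rewrite last_cat revp_last last_cat lr.
- have -> : last y1 p1 :: revp y1 p1 ++ r ++ p2 = (last y1 p1 :: revp y1 p1) ++ r ++ p2 by [].
  rewrite cat_uniq revp_uniq u1 cat_uniq.
  move: ur u2; rewrite /= => /andP[y1r ur] /andP[_ up2]; rewrite ur up2 andbT /=.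
  apply/andP; split.
    apply/hasP => -[z]; rewrite mem_cat => zIn zy0.
    have zy : z \in y1 :: p1 by rewrite -revp_mem; exact: zy0.
    case/orP: zIn => [zr|zp2].
      move: zy; rewrite inE => /orP[/eqP zy1|zp1]; first by move: y1r; rewrite -zy1 zr.
      by move: (n1D z zp1); rewrite (sr z _) // inE zr orbT.
    by apply: (d12' z zy); rewrite inE zp2 orbT.
  apply/hasP => -[z zp2 zr].
  by move: (n2D z zp2); rewrite (sr z _) // inE zr orbT.
- rewrite size_cat revp_size size_cat oddD oddD par oddD.
  by case: (odd (size p1)); case: (odd (size p2)).
- move: n2C x2C; clear pp2 u2 d12 d12' par; case/lastP: p2 n2D => [|q2 x2] n2D n2C x2C.
    by move=> z; exfalso; apply: (dis y2).
  rewrite -rcons_cat -rcons_cat interior_rcons.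
  move=> z; rewrite !mem_cat => /or3P[zp|zr|zq].
  - by apply: n1C; move: zp; rewrite /revp mem_rev.
  - by apply/negP => zC; apply: (dis z zC); apply: sr; rewrite inE zr orbT.
  - by apply: n2C; rewrite belast_rcons inE zq orbT.
Qed.

Lemma mem_interior (R : seq T) z : z \in interior R -> z \in R.
Proof. exact: mem_take. Qed.

Lemma assemble (e : rel T) (esym : symmetric e) (C D : seq T) y1 p1 y2 p2 :
  uniq C -> cycle e C -> ~~ odd (size C) ->
  uniq D -> cycle e D -> odd (size D) -> [disjoint C & D] ->
  conn e C D y1 p1 -> conn e C D y2 p2 -> [disjoint y1 :: p1 & y2 :: p2] ->
  index (last y1 p1) C < index (last y2 p2) C ->
  odd (index (last y1 p1) C) = odd (index (last y2 p2) C) ->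
  K23_based e.
Proof.
move=> uC cC evC uD cD oD dCD c1 c2 d12 lt par.
have c1' := c1; have c2' := c2; case: c1' => [_ y1D x1C _ _]; case: c2' => [_ y2D x2C _ _].
have d12' : forall z, z \in y1 :: p1 -> z \in y2 :: p2 -> False by apply/disjP.
have [R1 [R2 [a1 a2 ev1 ev2 dis12]]] := arcs_even esym uC cC evC x1C x2C lt par.
have y12 : y1 != y2.
  by apply/eqP => E; apply: (d12' y1); rewrite ?E mem_head.
have x12 : last y1 p1 != last y2 p2.
  by apply/eqP => E; apply: (d12' (last y1 p1)); [exact: mem_last | rewrite E; exact: mem_last].
have [r1 [r2 [ar1 ar2 sz]]] := arcs_any esym uD cD y1D y2D y12.
have [r [ar par']] : exists r, arc e y1 y2 r D /\ odd (size r) = odd (size p1 + size p2).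
  case: (boolP (odd (size r1) == odd (size p1 + size p2))) => [/eqP H|H]; first by exists r1.
  exists r2; split => //; move: H oD; rewrite -sz !oddD.
  by case: (odd (size r1)); case: (odd (size r2)); case: (odd (size p1)); case: (odd (size p2)).
have [E [pE lE uE evE intE]] := ear esym dCD c1 c2 d12 ar par'.
have inC1 : forall z, z \in interior R1 -> z \in C.
  by case: a1 => _ _ _ s z /mem_interior zR; apply: s; rewrite inE zR orbT.
have inC2 : forall z, z \in interior R2 -> z \in C.
  by case: a2 => _ _ _ s z /mem_interior zR; apply: s; rewrite inE zR orbT.
apply: (theta_K23 esym (a0 := last y1 p1) (a1 := last y2 p2)
  (R := fun j : 'I_3 => if val j == 0 then R1 else if val j == 1 then R2 else E)) => //.
- move=> [[|[|[|//]]] Hj] /=.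
  + by case: a1.
  + by case: a2.
  + by split.
- move=> [[|[|[|//]]] Hj] [[|[|[|//]]] Hj'] /= Hne;
    try by move/eqP: Hne; case; apply/val_inj.
  all: first [ by []
             | by rewrite disjoint_sym
             | by apply/disjP => z z1 zE; move: (intE z zE); rewrite (inC1 z z1)
             | by apply/disjP => z z1 zE; move: (intE z zE); rewrite (inC2 z z1)
             | by apply/disjP => z zE z1; move: (intE z zE); rewrite (inC1 z z1)
             | by apply/disjP => z zE z1; move: (intE z zE); rewrite (inC2 z z1) ].
Qed.

End Seqs.

Section Final.
Variable T : finType.

Lemma assemble2 (e : rel T) (esym : symmetric e) (C D : seq T) y1 p1 y2 p2 :
  uniq C -> cycle e C -> ~~ odd (size C) ->
  uniq D -> cycle e D -> odd (size D) -> [disjoint C & D] ->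
  conn e C D y1 p1 -> conn e C D y2 p2 -> [disjoint y1 :: p1 & y2 :: p2] ->
  odd (index (last y1 p1) C) = odd (index (last y2 p2) C) ->
  K23_based e.
Proof.
move=> uC cC evC uD cD oD dCD c1 c2 d12 par.
have c1' := c1; have c2' := c2; case: c1' => [_ _ x1C _ _]; case: c2' => [_ _ x2C _ _].
case: (ltngtP (index (last y1 p1) C) (index (last y2 p2) C)) => [lt|gt|E].
- exact: (assemble esym uC cC evC uD cD oD dCD c1 c2 d12 lt par).
- by apply: (assemble esym uC cC evC uD cD oD dCD c2 c1 _ gt); rewrite 1?disjoint_sym.
- exfalso; have d12' : forall z, z \in y1 :: p1 -> z \in y2 :: p2 -> False by apply/disjP.
  apply: (d12' (last y1 p1)); first exact: mem_last.
  by rewrite -(nth_index (last y1 p1) x1C) E nth_index // mem_last.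
Qed.

Lemma uniq3 (s1 s2 s3 : seq T) : uniq (s1 ++ s2 ++ s3) ->
  [/\ [disjoint s1 & s2], [disjoint s1 & s3] & [disjoint s2 & s3]].
Proof.
rewrite !cat_uniq has_cat negb_or => /and3P[_ /andP[h12 h13] /and3P[_ h23 _]].
split; apply/disjP => z z1 z2.
- by move/negP: h12; apply; apply/hasP; exists z.
- by move/negP: h13; apply; apply/hasP; exists z.
- by move/negP: h23; apply; apply/hasP; exists z.
Qed.

End Final.

Unset Implicit Arguments.

Theorem lemma3p3 (T : finType) (e : rel T) (e_sym : symmetric e)
  (e_irr : irreflexive e) :
  k_connected e 3 -> has_mixed_bicycle e -> K23_based e.
Proof.
move=> [_ Hk] [Qo [Qe [/and3P[l3o uo co] /and3P[l3e ue ce] oddo [eve l4e] dis]]].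
pose A := [set z in Qo]; pose B := [set z in Qe].
have out : forall (S : {set T}) (s : seq T), uniq s -> 3 <= size s -> #|S| < 3 ->
    exists2 a, a \in s & a \notin S.
  move=> S s us ls lS; case: (boolP (all (fun z => z \in S) s)) => [/allP H|].
    have : #|s| <= #|S| by apply: subset_leq_card; apply/subsetP.
    by rewrite (card_uniqP us) leqNgt (leq_trans lS ls).
  by rewrite -has_predC => /hasP[a aS naS]; exists a.
have Hsep : forall S, sep e A B S -> 3 <= #|S|.
  move=> S sS; rewrite leqNgt; apply/negP => lt.
  have [a aQ aS] := out S Qo uo l3o lt.
  have [b bQ bS] := out S Qe ue l3e lt.
  have /connectP[p pp lp] := Hk S lt a b aS bS.
  have pe : path e a p by apply: sub_path pp => u v /and3P[].
  have := sS a p pe; rewrite !inE aQ -lp bQ => /(_ isT isT) /hasP[z].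
  have ap := path_restrict_all (Q := fun u => u \notin S) pp.
  rewrite inE => /orP[/eqP->|zp] zS; first by move/negP: aS; apply.
  by move/negP: (allP ap z zp); apply.
have [Ps [sz aP uP]] := menger Hsep.
have [|Ps' [sz' H1 H2]] := choose_list (Q := fun P => conn e Qe Qo P.1 P.2) (vs := @verts T) (Ps := Ps).
  move=> [a p] PIn; have /and3P[/= pp aA lB] := allP aP _ PIn.
  rewrite !inE in aA lB.
  have ua : uniq (a :: p) := uniq_flatten_each uP PIn.
  have hQo : has (fun z => z \in Qo) (a :: p) by apply/hasP; exists a => //; exact: mem_head.
  have [pre [z' [q [Ep pq lq z'Q nh]]]] := suffixP pp hQo.
  have hQe : has (fun z => z \in Qe) (z' :: q) by apply/hasP; exists (last z' q); rewrite ?mem_last ?lq.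
  have [q1 [q1' [Eq pq1 lq1 nh1]]] := prefixP pq hQe.
  have sub : subseq (z' :: q1) (a :: p).
    apply: (subseq_trans (_ : subseq _ (z' :: q))); first by rewrite Eq; apply: (prefix_subseq (z' :: q1)).
    by rewrite Ep; apply: suffix_subseq.
  exists (z', q1); split => //; split => //=.
  - exact: subseq_uniq sub ua.
  - apply/andP; split; apply/allP => z zIn.
      by apply/negP => zQ; move/negP: nh; apply; apply/hasP; exists z => //; rewrite Eq mem_cat zIn.
    by apply/negP => zQ; move/negP: nh1; apply; apply/hasP; exists z.
have uP' := subseq_uniq H2 uP; clear H2.
rewrite sz in sz'.
case: Ps' sz' H1 uP' => [|[y1 p1] [|[y2 p2] [|[y3 p3] [|]]]] // _ H1 uP'.
have c1 : conn e Qe Qo y1 p1 by apply: (H1 (y1, p1)); rewrite !inE eqxx.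
have c2 : conn e Qe Qo y2 p2 by apply: (H1 (y2, p2)); rewrite !inE eqxx !orbT.
have c3 : conn e Qe Qo y3 p3 by apply: (H1 (y3, p3)); rewrite !inE eqxx !orbT.
have u3 : uniq ((y1 :: p1) ++ (y2 :: p2) ++ (y3 :: p3)) by move: uP'; rewrite /= cats0.
have [d12 d13 d23] := uniq3 u3.
have dQ : [disjoint Qe & Qo] by rewrite disjoint_sym.
have evQe : ~~ odd (size Qe) := eve.
case: (eqVneq (odd (index (last y1 p1) Qe)) (odd (index (last y2 p2) Qe))) => [E12|N12].
  exact: (assemble2 e_sym ue ce evQe uo co oddo dQ c1 c2 d12 E12).
case: (eqVneq (odd (index (last y1 p1) Qe)) (odd (index (last y3 p3) Qe))) => [E13|N13].
  exact: (assemble2 e_sym ue ce evQe uo co oddo dQ c1 c3 d13 E13).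
apply: (assemble2 e_sym ue ce evQe uo co oddo dQ c2 c3 d23).
by move: N12 N13; case: (odd _); case: (odd _); case: (odd _).
Qed.
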